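(* Let $\eta,\lambda>0$ with $\eta\lambda\le\tfrac12$, $x(0)\neq0$, and $x(t+1)=(1-\eta\lambda)x(t)-\eta\nabla L(x(t))$. Let $$I=\{T'\in\mathbb{N}: \forall\,0\le t\le T',\ \|x(t)\|_2^2\le\pi^2\rho\eta\ \text{ and }\ \|\nabla L(\bar x(t))\|_2^2>8\pi^4\rho^2\lambda\eta\}.$$ Suppose $0\in I$. Then $I$ is finite, and with $T:=\max I$ we have $T\le\frac{1}{6\lambda\eta}$ and $$\|x(T+1)\|_2^2\le\frac{2(\pi^2\rho\eta)^2}{\|x(0)\|_2^2}.$$
   Context: $L:\mathbb{R}^d\setminus\{0\}\to\mathbb{R}$ is $C^2$ and scale invariant, i.e. $L(cx)=L(x)$ for all $c>0$, $x\ne0$. $\rho:=\max_{\|x\|_2=1}\|\nabla^2L(x)\|_2>0$ (spectral norm). For $x\neq0$, $\bar x:=x/\|x\|_2$. *)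

(* Defs.v *)
From HB Require Import structures.
From mathcomp Require Import all_boot all_order all_algebra.
From mathcomp Require Import all_classical all_reals all_analysis.
Set Implicit Arguments. Unset Strict Implicit. Unset Printing Implicit Defensive.
Import Order.TTheory GRing.Theory Num.Theory.
Import numFieldNormedType.Exports.
Local Open Scope classical_set_scope.
Local Open Scope ring_scope.

Section Defs.
Variables (R : realType) (d : nat).

Definition sqn (v : 'rV[R]_d) : R := \sum_(i < d) (v 0 i) ^+ 2.
Definition enorm (v : 'rV[R]_d) : R := Num.sqrt (sqn v).

Definition xbar (v : 'rV[R]_d) : 'rV[R]_d := (enorm v)^-1 *: v.

Definition evec (i : 'I_d) : 'rV[R]_d := delta_mx 0 i.

Definition grad (L : 'rV[R]_d -> R) (x : 'rV[R]_d) : 'rV[R]_d :=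
  \row_i ('D_(evec i) L x).

Definition hess (L : 'rV[R]_d -> R) (x : 'rV[R]_d) : 'M[R]_d :=
  \matrix_(i, j) ('D_(evec j) (fun y => grad L y 0 i) x).

Definition C2_off0 (L : 'rV[R]_d -> R) : Prop :=
  forall x : 'rV[R]_d, x != 0 ->
    differentiable L x /\
    (forall i : 'I_d, differentiable (fun y => grad L y 0 i) x) /\
    (forall i j : 'I_d, {for x, continuous (fun y => hess L y i j)}).

Definition scale_invariant (L : 'rV[R]_d -> R) : Prop :=
  forall (c : R) (x : 'rV[R]_d), 0 < c -> x != 0 -> L (c *: x) = L x.

Definition specnorm (A : 'M[R]_d) : R :=
  sup [set enorm (A *m v^T)^T | v in [set v : 'rV[R]_d | enorm v = 1]].

(* rho := max over the unit sphere of the spectral norm of the Hessian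
   (stated as the maximum: an upper bound which is attained) *)
Definition is_rho (L : 'rV[R]_d -> R) (rho : R) : Prop :=
  (forall x : 'rV[R]_d, enorm x = 1 -> specnorm (hess L x) <= rho) /\
  (exists x : 'rV[R]_d, enorm x = 1 /\ specnorm (hess L x) = rho).

End Defs.

(* Main.v *)
Require Import Defs.
From HB Require Import structures.
From mathcomp Require Import all_boot all_order all_algebra.
From mathcomp Require Import all_classical all_reals all_analysis.
From mathcomp Require Import ring lra.
Set Implicit Arguments. Unset Strict Implicit. Unset Printing Implicit Defensive.
Import Order.TTheory GRing.Theory Num.Theory.
Import numFieldNormedType.Exports.
Local Open Scope ring_scope.

Section Alg.
Variables (R : realType) (d : nat).
Implicit Types (p q v w : 'rV[R]_d).

Definition dot p q : R := \sum_(i < d) p 0 i * q 0 i.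

Lemma sqn_dot p : sqn p = dot p p.
Proof. by apply: eq_bigr => i _; rewrite expr2. Qed.

Lemma dotC p q : dot p q = dot q p.
Proof. by apply: eq_bigr => i _; rewrite mulrC. Qed.

Lemma dotDl p q w : dot (p + q) w = dot p w + dot q w.
Proof. by rewrite /dot -big_split; apply: eq_bigr => i _; rewrite mxE mulrDl. Qed.

Lemma dotZl c p w : dot (c *: p) w = c * dot p w.
Proof. by rewrite /dot mulr_sumr; apply: eq_bigr => i _; rewrite mxE mulrA. Qed.

Lemma dotNl p w : dot (- p) w = - dot p w.
Proof. by rewrite -scaleN1r dotZl mulN1r. Qed.

Lemma sqn_ge0 p : 0 <= sqn p.
Proof. by apply: sumr_ge0 => i _; rewrite sqr_ge0. Qed.

Lemma sqn_coord p i : p 0 i ^+ 2 <= sqn p.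
Proof.
rewrite /sqn (bigD1 i) //= lerDl; apply: sumr_ge0 => j _; exact: sqr_ge0.
Qed.

Lemma sqn_eq0 p : (sqn p == 0) = (p == 0).
Proof.
apply/idP/idP => [/eqP h|/eqP ->]; last first.
  by rewrite /sqn big1 // => i _; rewrite mxE expr0n.
apply/eqP/rowP => i; rewrite mxE.
have := sqn_coord p i; rewrite h => hi.
by apply/eqP; rewrite -sqrf_eq0 eq_le hi sqr_ge0.
Qed.

Lemma sqn_gt0 p : p != 0 -> 0 < sqn p.
Proof. by move=> hp; rewrite lt_def sqn_eq0 hp sqn_ge0. Qed.

Lemma sqnZ c p : sqn (c *: p) = c ^+ 2 * sqn p.
Proof. by rewrite !sqn_dot dotZl dotC dotZl mulrA -expr2. Qed.

Lemma sqnD p q : sqn (p + q) = sqn p + sqn q + 2 * dot p q.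
Proof.
rewrite /sqn /dot mulr_sumr -!big_split /=; apply: eq_bigr => i _; rewrite mxE.
rewrite sqrrD; ring.
Qed.

Lemma enorm_sq p : enorm p ^+ 2 = sqn p.
Proof. by rewrite /enorm sqr_sqrtr // sqn_ge0. Qed.

Lemma enorm_gt0 p : p != 0 -> 0 < enorm p.
Proof. by move=> hp; rewrite /enorm sqrtr_gt0 sqn_gt0. Qed.

Lemma sqn_xbar p : p != 0 -> sqn (xbar p) = 1.
Proof.
move=> hp; rewrite /xbar sqnZ exprVn enorm_sq mulVf //.
by rewrite gt_eqF // sqn_gt0.
Qed.

Lemma xbar_neq0 p : p != 0 -> xbar p != 0.
Proof.
by move=> hp; rewrite -sqn_eq0 sqn_xbar // oner_eq0.
Qed.

Lemma xbarK p : p != 0 -> enorm p *: xbar p = p.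
Proof.
by move=> hp; rewrite /xbar scalerA mulfV ?scale1r // gt_eqF // enorm_gt0.
Qed.

Lemma dot_unit_sq p v : sqn v = 1 -> dot p v ^+ 2 <= sqn p.
Proof.
move=> hv.
have := sqn_ge0 (p - dot p v *: v).
rewrite -scaleNr sqnD sqnZ sqrrN hv.
rewrite (dotC p (_ *: _)) dotZl (dotC v p); lra.
Qed.

End Alg.


Section Der.
Variables (R : realType) (d : nat).

Lemma Dlin (g : 'rV[R]_d -> R) p v : differentiable g p ->
  'D_v g p = \sum_(j < d) v 0 j * 'D_(evec R j) g p.
Proof.
move=> dg; rewrite deriveE //.
under eq_bigr do rewrite deriveE //.
rewrite {1}(row_sum_delta v) linear_sum; apply: eq_bigr => j _.
by rewrite linearZ.
Qed.

Lemma chain (g : 'rV[R]_d -> R) (c : R -> 'rV[R]_d) t w :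
  differentiable g (c t) -> is_derive t 1 c w ->
  is_derive t 1 (g \o c) ('D_w g (c t)).
Proof.
move=> dg dc.
have dc' : differentiable c t by apply/derivable1_diffP.
have dgc : differentiable (g \o c) t by apply: differentiable_comp.
apply: DeriveDef; first exact: diff_derivable.
rewrite deriveE // diff_comp //= -(deriveE _ dc') (@derive_val _ _ _ _ _ _ _ dc).
by rewrite deriveE.
Qed.

Lemma rowder (F : R -> 'rV[R]_d) (t : R) (F' : 'rV[R]_d) :
  (forall j, is_derive t (1:R) (fun s : R => F s 0 j) (F' 0 j)) -> is_derive t 1 F F'.
Proof.
move=> hj.
have dF : derivable F t 1.
  by apply/derivable_mxP => i j; rewrite ord1; exact: ex_derive.
apply: DeriveDef => //.
rewrite derive_mx //; apply/matrixP => i j; rewrite mxE ord1.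
exact: derive_val.
Qed.

End Der.

Section Grad.
Variables (R : realType) (d : nat) (L : 'rV[R]_d -> R).
Hypotheses (si : scale_invariant L) (c2 : C2_off0 L).

Lemma is_derive_mulk (t k : R) : is_derive t (1:R) (fun s : R => s * k) k.
Proof.
have h := is_deriveM (is_derive_id t (1:R)) (is_derive_cst k t (1:R)).
apply: is_derive_eq h _.
rewrite /= scaler0 add0r.
by rewrite /GRing.scale /= mulr1.
Qed.

Lemma si_all (c : R) y : 0 < c -> L (c *: y) = L y.
Proof.
move=> c0; have [->|y0] := eqVneq y 0; first by rewrite scaler0.
exact: si.
Qed.

Lemma grad_coord p i : grad L p 0 i = 'D_(evec R i) L p.
Proof. by rewrite mxE. Qed.

Lemma DL_dot p v : p != 0 -> 'D_v L p = dot v (grad L p).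
Proof.
move=> hp; rewrite Dlin; last exact: (c2 hp).1.
by apply: eq_bigr => j _; rewrite grad_coord.
Qed.

Lemma euler v : v != 0 -> dot v (grad L v) = 0.
Proof.
move=> hv; rewrite -DL_dot //.
pose c := fun s : R => s *: v.
have dc : is_derive (1:R) (1:R) c v.
  apply: rowder => j; rewrite /c.
  have -> : (fun s : R => (s *: v) 0 j) = (fun s => s * v 0 j).
    by apply/funext => s; rewrite mxE.
  exact: is_derive_mulk.
have dL : differentiable L (c 1) by rewrite /c scale1r; exact: (c2 hv).1.
have h1 := chain dL dc.
have h2 : is_derive (1:R) (1:R) (L \o c) 0.
  apply: (@near_eq_is_derive _ _ _ (cst (L v))).
  have := @Nlt_nbhsl R 1 0; rewrite ltrN10 => /(_ isT).
  apply: filterS => s; rewrite oppr_lt0 => s0 /=.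
  by rewrite /c si_all.
have := @derive_val _ _ _ _ _ _ _ h1; rewrite (@derive_val _ _ _ _ _ _ _ h2).
by rewrite /c scale1r.
Qed.

Lemma grad_hom c p : 0 < c -> p != 0 -> grad L (c *: p) = c^-1 *: grad L p.
Proof.
move=> c0 hp; apply/rowP => i; rewrite !mxE.
have eqL : L = L \o ( *:%R c^-1).
  by apply/funext => y /=; rewrite si_all // invr_gt0.
have dL : differentiable L p := (c2 hp).1.
have dL' : differentiable L (c^-1 *: (c *: p)).
  by rewrite scalerA mulVf ?gt_eqF // scale1r.
have ds : differentiable ( *:%R c^-1) (c *: p) by [].
rewrite {1}eqL deriveE; last exact: differentiable_comp.
rewrite diff_comp // diff_val /= scalerA mulVf ?gt_eqF // scale1r.
by rewrite linearZ deriveE.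
Qed.

End Grad.

Section Hess.
Variables (R : realType) (d : nat) (L : 'rV[R]_d -> R) (rho : R).
Hypotheses (si : scale_invariant L) (c2 : C2_off0 L) (hr : is_rho L rho).

Lemma sqrN (x : R) : x ^+ 2 = `|x| ^+ 2.
Proof. by rewrite real_normK // num_real. Qed.

Lemma Dgrad p w i : p != 0 ->
  'D_w (fun y => grad L y 0 i) p = \sum_(k < d) w 0 k * hess L p i k.
Proof.
move=> hp; rewrite Dlin; last exact: ((c2 hp).2.1 i).
by apply: eq_bigr => k _; rewrite [hess L p i k]mxE.
Qed.

Lemma enorm1 (v : 'rV[R]_d) : sqn v = 1 -> enorm v = 1.
Proof. by move=> h; rewrite /enorm h sqrtr1. Qed.

Lemma coord_le1 (v : 'rV[R]_d) k : sqn v = 1 -> `|v 0 k| <= 1.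
Proof.
move=> h; have := sqn_coord v k; rewrite h => hk.
have := normr_ge0 (v 0 k); rewrite [v 0 k ^+ 2]sqrN in hk; nra.
Qed.

Lemma mulmx_coord (A : 'M[R]_d) (v : 'rV[R]_d) i :
  (A *m v^T)^T 0 i = \sum_(k < d) A i k * v 0 k.
Proof. by rewrite !mxE; apply: eq_bigr => k _; rewrite mxE. Qed.

Lemma specnorm_ge (A : 'M[R]_d) v : sqn v = 1 ->
  enorm ((A *m v^T)^T) <= specnorm A.
Proof.
move=> hv; apply: sup_upper_bound; last first.
  by exists v => //=; apply: enorm1.
split; first by exists (enorm ((A *m v^T)^T)), v => //; apply: enorm1.
exists (Num.sqrt (\sum_(i < d) (\sum_(k < d) `|A i k|) ^+ 2)).
move=> y [w /= hw <-]; rewrite /enorm ler_sqrt; last first.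
  by apply: sumr_ge0 => i _; rewrite sqr_ge0.
have hw1 : sqn w = 1 by rewrite -enorm_sq hw expr1n.
apply: ler_sum => i _; rewrite mulmx_coord.
have h1 : `|\sum_(k < d) A i k * w 0 k| <= \sum_(k < d) `|A i k|.
  apply: le_trans (ler_norm_sum _ _ _) _; apply: ler_sum => k _.
  rewrite normrM; apply: ler_piMr => //; exact: coord_le1.
have h0 := normr_ge0 (\sum_(k < d) A i k * w 0 k).
rewrite [_ ^+ 2]sqrN; nra.
Qed.

Lemma quad_bound p v : sqn p = 1 -> sqn v = 1 ->
  `|\sum_(j < d) v 0 j * \sum_(k < d) v 0 k * hess L p j k| <= rho.
Proof.
move=> hp hv.
set q := (hess L p *m v^T)^T.
have -> : \sum_(j < d) v 0 j * \sum_(k < d) v 0 k * hess L p j k = dot q v.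
  apply: eq_bigr => j _; rewrite mulmx_coord mulrC; congr (_ * _).
  by apply: eq_bigr => k _; rewrite mulrC.
have h1 := dot_unit_sq q hv.
have h2 := specnorm_ge (hess L p) hv.
have h3 : specnorm (hess L p) <= rho by apply: hr.1; rewrite enorm1.
have h4 : 0 <= enorm q by apply: sqrtr_ge0.
rewrite -enorm_sq in h1.
have h5 := normr_ge0 (dot q v); rewrite [dot q v ^+ 2]sqrN in h1; nra.
Qed.

End Hess.

Section Curve.
Variables (R : realType) (d : nat).

Definition curve (a b : 'rV[R]_d) (t : R) : 'rV[R]_d := cos t *: a + sin t *: b.

Lemma curve_coord a b t j : curve a b t 0 j = cos t * a 0 j + sin t * b 0 j.
Proof. by rewrite !mxE. Qed.

Lemma is_derive_cs (t k m : R) :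
  is_derive t (1:R) (fun s : R => cos s * k + sin s * m) (- sin t * k + cos t * m).
Proof.
have h := is_deriveD (is_deriveM (is_derive_cos t) (is_derive_cst k t (1:R)))
   (is_deriveM (is_derive_sin t) (is_derive_cst m t (1:R))).
apply: is_derive_eq h _.
by rewrite /= !scaler0 !add0r /GRing.scale /=; ring.
Qed.

Lemma curve_derive a b t : is_derive t (1:R) (curve a b) (curve b (- a) t).
Proof.
apply: rowder => j; rewrite curve_coord.
have -> : (fun s => curve a b s 0 j) = (fun s => cos s * a 0 j + sin s * b 0 j).
  by apply/funext => s; rewrite curve_coord.
apply: is_derive_eq (is_derive_cs t _ _) _.
by rewrite mxE; ring.
Qed.

Lemma curve_sqn a b t : sqn a = 1 -> sqn b = 1 -> dot a b = 0 ->
  sqn (curve a b t) = 1.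
Proof.
move=> ha hb hab; rewrite /curve sqnD !sqnZ ha hb dotZl dotC dotZl dotC hab.
by rewrite !mulr0 !mulr1 addr0 cos2Dsin2.
Qed.

Lemma curve0 a b : curve a b 0 = a.
Proof. by rewrite /curve cos0 sin0 scale1r scale0r addr0. Qed.

Lemma curve2pi a b : curve a b (pi *+ 2) = a.
Proof. by rewrite /curve cos2pi sin2pi scale1r scale0r addr0. Qed.

End Curve.

Section GB.
Variables (R : realType) (d : nat) (L : 'rV[R]_d -> R) (rho : R).
Hypotheses (si : scale_invariant L) (c2 : C2_off0 L) (hr : is_rho L rho)
  (rho0 : 0 < rho).

Lemma enorm0 : enorm (0 : 'rV[R]_d) = 0.
Proof. by rewrite /enorm (eqP (_ : sqn (0 : 'rV[R]_d) == 0)) ?sqrtr0 // sqn_eq0. Qed.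

Lemma grad_bound a : sqn a = 1 -> enorm (grad L a) <= rho * (pi *+ 2).
Proof.
move=> ha.
have pi2 : 0 < pi *+ 2 :> R by rewrite mulr2n; have := @pi_gt0 R; lra.
have a0 : a != 0 by rewrite -sqn_eq0 ha oner_eq0.
set g := grad L a.
have [g0|gn0] := eqVneq g 0.
  by rewrite g0 enorm0; apply: mulr_ge0; [exact: ltW|exact: ltW].
set u := xbar g.
have eg : 0 < enorm g := enorm_gt0 gn0.
have hu : sqn u = 1 := sqn_xbar gn0.
have hau : dot a u = 0.
  by rewrite /u /xbar dotC dotZl dotC (euler si c2 a0) mulr0.
have hua : dot u (- a) = 0 by rewrite dotC dotNl hau oppr0.
have hna : sqn (- a) = 1 by rewrite -scaleN1r sqnZ sqrrN expr1n mul1r.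
pose gam := curve a u.
pose gam' := curve u (- a).
have gs t : sqn (gam t) = 1 := curve_sqn t ha hu hau.
have gs' t : sqn (gam' t) = 1 := curve_sqn t hu hna hua.
have gnz t : gam t != 0 by rewrite -sqn_eq0 gs oner_eq0.
pose f := L \o gam.
pose h t := dot (gam' t) (grad L (gam t)).
have fd t : is_derive t (1:R) f (h t).
  have := chain ((c2 (gnz t)).1) (curve_derive a u t).
  by rewrite DL_dot.
pose P (j : 'I_d) := fun t : R => cos t * u 0 j + sin t * (- a) 0 j.
pose Q (j : 'I_d) := (fun y => grad L y 0 j) \o gam.
pose hd t := \sum_(j < d) (P j t *: 'D_(gam' t) (fun y => grad L y 0 j) (gam t)
   + Q j t *: (- sin t * u 0 j + cos t * (- a) 0 j)).
have hdd t : is_derive t (1:R) h (hd t).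
  have E : h = \sum_(j < d) (P j * Q j).
    rewrite fct_sumE; apply/funext => s; rewrite /h /dot.
    by apply: eq_bigr => j _; rewrite /gam' curve_coord.
  rewrite E /hd; apply: is_derive_sum => j.
  have dP := is_derive_cs t (u 0 j) ((- a) 0 j).
  have dQ := chain ((c2 (gnz t)).2.1 j) (curve_derive a u t).
  exact: (is_deriveM dP dQ).
have hdb t : `|hd t| <= rho.
  rewrite /hd big_split /=.
  have -> : \sum_(j < d) Q j t *: (- sin t * u 0 j + cos t * (- a) 0 j)
      = - dot (gam t) (grad L (gam t)).
    rewrite /dot -sumrN; apply: eq_bigr => j _.
    rewrite /Q /= /gam curve_coord !mxE /GRing.scale /=; ring.
  rewrite euler // oppr0 addr0.
  have -> : \sum_(j < d) P j t *: 'D_(gam' t) (fun y => grad L y 0 j) (gam t)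
     = \sum_(j < d) gam' t 0 j * \sum_(k < d) gam' t 0 k * hess L (gam t) j k.
    apply: eq_bigr => j _; rewrite Dgrad //.
    by rewrite /P /gam' curve_coord.
  exact: quad_bound.
have [c cI dc0] : exists2 c, c \in `]0, pi *+ 2[ & is_derive c (1:R) f 0.
  apply: Rolle => //.
  - by apply: derivable_within_continuous => x _; by have [dx _] := fd x.
  - by rewrite /f /= /gam curve0 curve2pi.
have hc : h c = 0.
  have e1 := @derive_val _ _ _ _ _ _ _ (fd c).
  have e2 := @derive_val _ _ _ _ _ _ _ dc0.
  by rewrite -e1 -e2.
move: cI; rewrite in_itv /= => /andP[c0 c2pi].
have [xi _ hxi] : exists2 xi, xi \in `[0, c] & h c - h 0 = hd xi * (c - 0).
  apply: MVT_segment; first exact: ltW.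
  - by apply: derivable_within_continuous => x _; by have [dx _] := hdd x.
have h0 : h 0 = enorm g.
  rewrite /h /gam' /gam !curve0 -/g /u /xbar dotZl -sqn_dot -enorm_sq.
  by rewrite expr2 mulKf // gt_eqF.
rewrite hc h0 subr0 sub0r in hxi.
have hb := hdb xi.
have : enorm g = - (hd xi * c) by rewrite -hxi opprK.
move=> ->.
have := ler_norm (- hd xi); rewrite normrN => hn.
have e1 : 0 <= (`|hd xi| + hd xi) * c by apply: mulr_ge0; lra.
have e2 : 0 <= (rho - `|hd xi|) * c by apply: mulr_ge0; [rewrite subr_ge0|exact: ltW].
have e3 : 0 <= rho * (pi *+ 2 - c).
  by apply: mulr_ge0; [exact: ltW|rewrite subr_ge0 ltW].
lra.
Qed.

Lemma grad_sqn_bound a : sqn a = 1 -> sqn (grad L a) <= (pi ^+ 2 * rho) ^+ 2.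
Proof.
move=> ha; have hb := grad_bound ha.
have h0 : 0 <= enorm (grad L a) by apply: sqrtr_ge0.
have p2 := @pi_ge2 R.
rewrite -enorm_sq.
have h1 : rho * (pi *+ 2) <= pi ^+ 2 * rho.
  rewrite mulr2n expr2; nra.
have h2 : enorm (grad L a) <= pi ^+ 2 * rho := le_trans hb h1.
nra.
Qed.

End GB.

Unset Implicit Arguments.

Theorem mainTheorem11 (R : realType) (d : nat) (L : 'rV[R]_d -> R) (rho : R)
  (eta lam : R) (x : nat -> 'rV[R]_d) :
  scale_invariant L -> C2_off0 L -> is_rho L rho -> 0 < rho ->
  0 < eta -> 0 < lam -> eta * lam <= 1 / 2 ->
  x 0%N != 0 ->
  (forall t : nat, x t.+1 = (1 - eta * lam) *: x t - eta *: grad L (x t)) ->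
  let I := fun T' : nat => forall t : nat, (t <= T')%N ->
      sqn (x t) <= pi ^+ 2 * rho * eta /\
      8 * pi ^+ 4 * rho ^+ 2 * lam * eta < sqn (grad L (xbar (x t))) in
  I 0%N ->
  exists T : nat,
    [/\ I T, (forall T' : nat, I T' -> (T' <= T)%N),
        T%:R <= 1 / (6 * lam * eta) &
        sqn (x T.+1) <= 2 * (pi ^+ 2 * rho * eta) ^+ 2 / sqn (x 0%N)].
Proof.
move=> si c2 hr rho0 eta0 lam0 hel x0 hx I I0.
have pi0 := @pi_gt0 R.
set K := pi ^+ 2 * rho * eta.
have K0 : 0 < K by rewrite /K !mulr_gt0 // exprn_gt0.
set N0 := sqn (x 0%N).
have N00 : 0 < N0 := sqn_gt0 x0.
have step t : x t != 0 -> sqn (x t.+1) = (1 - eta * lam) ^+ 2 * sqn (x t)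
     + eta ^+ 2 * sqn (grad L (xbar (x t))) / sqn (x t).
  move=> ht; rewrite hx -(scaleNr eta (grad L (x t))) sqnD !sqnZ dotZl dotC dotZl.
  rewrite dotC euler // !mulr0 addr0.
  have eg : grad L (x t) = (enorm (x t))^-1 *: grad L (xbar (x t)).
    by rewrite -{1}(xbarK ht) grad_hom // ?enorm_gt0 ?xbar_neq0.
  rewrite eg sqnZ exprVn enorm_sq sqrrN; ring.
pose kap := 6 * pi ^+ 2 * rho * lam * eta ^+ 2.
have claim T' : I T' -> forall t, (t <= T')%N ->
    x t != 0 /\ N0 + t%:R * kap <= sqn (x t).
  move=> IT; elim => [|t IH] ht.
    by split => //; rewrite mul0r addr0.
  have [xt Nt] := IH (ltnW ht).
  have [NK GB] := IT t (ltnW ht).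
  set N := sqn (x t) in Nt NK.
  set G := sqn (grad L (xbar (x t))) in GB.
  have N0' : 0 < N := sqn_gt0 xt.
  have hG : 8 * pi ^+ 2 * rho * lam * eta ^+ 2 <= eta ^+ 2 * G / N.
    rewrite ler_pdivlMr //.
    have h1 : 0 <= eta ^+ 2 * (G - 8 * pi ^+ 4 * rho ^+ 2 * lam * eta).
      by apply: mulr_ge0; [exact: sqr_ge0|rewrite subr_ge0 ltW].
    have h2 : 0 <= (8 * pi ^+ 2 * rho * lam * eta ^+ 2) * (K - N).
      apply: mulr_ge0; last by rewrite subr_ge0.
      by apply: mulr_ge0; [rewrite !mulr_ge0 // ?ltW // exprn_ge0 // ltW|exact: sqr_ge0].
    rewrite /K in h2; nra.
  have hA : N - 2 * (eta * lam) * K <= (1 - eta * lam) ^+ 2 * N.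
    have h1 : 0 <= (eta * lam) ^+ 2 * N by apply: mulr_ge0; [exact: sqr_ge0|exact: ltW].
    have h2 : 0 <= (eta * lam) * (K - N).
      by apply: mulr_ge0; [rewrite mulr_ge0 // ltW|rewrite subr_ge0].
    nra.
  have hS := step t xt; rewrite -/N -/G in hS.
  have hN : N0 + t.+1%:R * kap <= sqn (x t.+1).
    rewrite hS -addn1 natrD mulrDl mul1r.
    have e1 : 2 * (eta * lam) * K = 2 * pi ^+ 2 * rho * lam * eta ^+ 2.
      by rewrite /K; ring.
    have e2 : kap = 6 * pi ^+ 2 * rho * lam * eta ^+ 2 by [].
    clearbody kap; lra.
  split => //; rewrite -sqn_eq0; apply/negP => /eqP h0.
  have : 0 < N0 + t.+1%:R * kap.
    have k0 : 0 <= kap by rewrite /kap !mulr_ge0 // ?ltW // ?exprn_ge0 // ltW.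
    have : 0 <= t.+1%:R * kap by rewrite mulr_ge0.
    lra.
  by rewrite h0 in hN; lra.
have bnd T' : I T' -> T'%:R <= 1 / (6 * lam * eta).
  move=> IT; have [_ hN] := claim T' IT T' (leqnn _).
  have [hK _] := IT T' (leqnn _).
  have eK : K = pi ^+ 2 * rho * eta by [].
  have hk : T'%:R * kap < K by lra.
  have e : kap = K * (6 * lam * eta) by rewrite /kap /K; ring.
  rewrite e in hk.
  have l0 : 0 < 6 * lam * eta by rewrite !mulr_gt0.
  rewrite ler_pdivlMr //.
  have : (T'%:R * (6 * lam * eta) - 1) * K < 0 by nra.
  rewrite pmulr_llt0 // subr_lt0 => /ltW //.
pose P := fun n => `[< I n >].
have exP : exists n, P n by exists 0%N; apply/asboolP.
have ubP : forall n, P n -> (n <= Num.truncn (1 / (6 * lam * eta)))%N.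
  move=> n /asboolP In; rewrite -ltnS -(ltr_nat R).
  exact: le_lt_trans (bnd n In) (truncnS_gt _).
case: (ex_maxnP exP ubP) => T /asboolP IT maxT.
exists T; split => //.
- by move=> T' IT'; apply: maxT; apply/asboolP.
- exact: bnd.
have [xT NT] := claim T IT T (leqnn _).
have [KT _] := IT T (leqnn _).
have N0K : N0 <= K by have [] := I0 0%N (leqnn _).
rewrite step //.
set N := sqn (x T) in NT KT *.
set G := sqn (grad L (xbar (x T))).
have GB : G <= (pi ^+ 2 * rho) ^+ 2.
  by apply: (grad_sqn_bound si c2 hr rho0); rewrite sqn_xbar.
have NN : N0 <= N.
  have : 0 <= T%:R * kap by rewrite mulr_ge0 // /kap !mulr_ge0 // ?ltW // ?exprn_ge0 // ltW.
  lra.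
have N0' : 0 < N := lt_le_trans N00 NN.
have a0 : 0 <= 1 - eta * lam by lra.
have a1 : 1 - eta * lam <= 1 by have := mulr_gt0 eta0 lam0; lra.
have t1 : (1 - eta * lam) ^+ 2 * N <= K ^+ 2 / N0.
  rewrite ler_pdivlMr //.
  have : (1 - eta * lam) ^+ 2 <= 1.
    by rewrite expr2; apply: mulr_ile1.
  move=> s1.
  have h1 : 0 <= (1 - (1 - eta * lam) ^+ 2) * N * N0.
    by rewrite !mulr_ge0 // ?subr_ge0 // ltW.
  have h2 : N * N0 <= K * K by apply: ler_pM => //; exact: ltW.
  have eK : K = pi ^+ 2 * rho * eta by [].
  clearbody K; rewrite expr2; nra.
have t2 : eta ^+ 2 * G / N <= K ^+ 2 / N0.
  have iv : N^-1 <= N0^-1 by rewrite lef_pV2 ?posrE.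
  have e : K ^+ 2 = eta ^+ 2 * (pi ^+ 2 * rho) ^+ 2 by rewrite /K; ring.
  rewrite e -(mulrA (eta ^+ 2) G) -(mulrA (eta ^+ 2) ((pi ^+ 2 * rho) ^+ 2)).
  apply: ler_wpM2l; first exact: sqr_ge0.
  apply: ler_pM => //; first exact: sqn_ge0.
  by rewrite invr_ge0 ltW.
have -> : 2 * K ^+ 2 / N0 = K ^+ 2 / N0 + K ^+ 2 / N0 by ring.
exact: lerD.
Qed.
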